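(* Let $n,k,d\in\mathbb{N}$ with $n\ge k\ge d$. Then every symmetric polynomial $f=\sum_{\ell=0}^d\alpha_\ell f_\ell$ on $\{-1,1\}^n$ (with $\alpha_0,\dots,\alpha_d\in\mathbb{R}$) satisfies $$\inf_{g\in \mathscr{P}_{>k}^n} \|f-g\|_1 \leq \sum_{\ell=0}^d |\alpha _\ell|\, | \tilde{c}(k,\ell)|.$$
   Context: For $\ell\ge1$, $f_\ell(x)=\sum_{S\subseteq\{1,\dots,n\},|S|=\ell}\prod_{i\in S}x_i$ is the $\ell$-th elementary symmetric multilinear polynomial on $\{-1,1\}^n$, and $f_0\equiv1$. Every $g:\{-1,1\}^n\to\mathbb{R}$ has a unique expansion $g=\sum_S\widehat g(S)w_S$ with $w_S(x)=\prod_{i\in S}x_i$, and $\mathscr{P}^n_{>k}=\{g:\ \widehat g(S)=0\text{ whenever }|S|\le k\}$. $\|\cdot\|_1$ is the $L_1$ norm with respect to the uniform probability measure on $\{-1,1\}^n$. Let $T_k(x)=\sum_{\ell=0}^k c(k,\ell)x^\ell$ be the $k$-th Chebyshev polynomial of the first kind, $T_k(\cos\theta)=\cos(k\theta)$ (with $c(k,\ell)=0$ for $\ell>k$). Define $\tilde c(k,\ell)=c(k,\ell)$ if $k-\ell$ is even and $\tilde c(k,\ell)=c(k-1,\ell)$ if $k-\ell$ is odd. *)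

(* Defs.v *)
From HB Require Import structures.
From mathcomp Require Import all_boot all_order all_algebra.
From mathcomp Require Import boolp classical_sets reals.
Unset Printing Implicit Defensive.
Import Order.TTheory GRing.Theory Num.Theory.
Local Open Scope ring_scope.

(* The hypercube {-1,1}^n : a point is encoded by a boolean vector b,
   with coordinate x_i = (-1)^(b i), i.e. true |-> -1, false |-> 1. *)
Definition cube (n : nat) := {ffun 'I_n -> bool}.

Definition coord {R : realType} (b : bool) : R := if b then -1 else 1.

Definition walsh {R : realType} (n : nat) (S : {set 'I_n}) (x : cube n) : R :=
  \prod_(i in S) coord (x i).

Definition esym {R : realType} (n l : nat) (x : cube n) : R :=
  \sum_(S : {set 'I_n} | #|S| == l) walsh n S x.

Definition symf {R : realType} (n d : nat) (alpha : nat -> R) (x : cube n) : R :=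
  \sum_(l < d.+1) alpha l * esym n l x.

Definition Pgt {R : realType} (n k : nat) : set (cube n -> R) :=
  [set g | exists c : {set 'I_n} -> R,
      (forall S : {set 'I_n}, (#|S| <= k)%N -> c S = 0) /\
      (forall x : cube n, g x = \sum_(S : {set 'I_n}) c S * walsh n S x)].

Definition norm1 {R : realType} (n : nat) (h : cube n -> R) : R :=
  (\sum_(x : cube n) `|h x|) / (2 ^+ n).

Fixpoint chebT2 {R : realType} (k : nat) : {poly R} * {poly R} :=
  match k with
  | 0 => (1, 'X)
  | k'.+1 => let p := chebT2 k' in (p.2, 2%:P * 'X * p.2 - p.1)
  end.
Definition chebT {R : realType} (k : nat) : {poly R} := (chebT2 k).1.

Definition chebc {R : realType} (k l : nat) : R := (chebT k)`_l.

Definition ctilde {R : realType} (k l : nat) : R :=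
  if odd (k - l) then chebc (R := R) k.-1 l else chebc (R := R) k l.

(* Main.v *)
Require Import Defs.
From HB Require Import structures.
From mathcomp Require Import all_boot all_order all_algebra.
From mathcomp Require Import boolp classical_sets reals.
From mathcomp Require Import trigo.
From mathcomp Require Import ring lra zify.
Import Order.TTheory GRing.Theory Num.Theory.
Local Open Scope ring_scope.

Section Cheb.
Variable R : realType.

Lemma oddDS a b : odd (a.+1 + b) = ~~ odd (a + b).
Proof. by rewrite addSn. Qed.

Lemma chebT2_coef (k m : nat) :
  (odd (k + m) || (k < m)%N -> ((chebT2 (R:=R) k).1)`_m = 0) /\
  (odd (k.+1 + m) || (k.+1 < m)%N -> ((chebT2 (R:=R) k).2)`_m = 0).
Proof.
elim: k m => [|k IH] m /=.
  split; first by case: m => [|[|m]] //= _; rewrite coefC.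
  by rewrite coefX; case: m => [|[|m]].
split; first by move=> h; have [_ ->] := IH m.
move=> h; rewrite coefB -mulrA coefCM coefXM.
have [h1 _] := IH m.
rewrite h1; last first.
  move: h; rewrite negbK; case: (odd (k+m)) => //= h.
  by apply: ltn_trans h; apply: leq_trans (leqnSn _).
case: m h {h1} => [|m] h; first by rewrite mulr0 subr0.
have [_ ->] := IH m; first by rewrite mulr0 subr0.
by move: h; rewrite negbK addnS addSn.
Qed.

Lemma chebT2_cos (k : nat) (t : R) :
  ((chebT2 (R:=R) k).1).[cos t] = cos (k%:R * t) /\
  ((chebT2 (R:=R) k).2).[cos t] = cos (k.+1%:R * t).
Proof.
elim: k => [|k [IH1 IH2]] /=.
  by rewrite hornerC hornerX mul0r cos0 mul1r.
split=> //.
rewrite hornerD hornerN !hornerM hornerC hornerX IH1 IH2.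
have e1 : k.+2%:R * t = k.+1%:R * t + t by rewrite -[k.+2]addn1 natrD; ring.
have e2 : k%:R * t = k.+1%:R * t - t by rewrite -[k.+1]addn1 natrD; ring.
rewrite e1 e2 !cosD cosN sinN; ring.
Qed.
End Cheb.
Section Nodes.
Variable R : realType.
Variable K : nat.

Definition theta (i : nat) : R := i%:R * (pi / K%:R).
Definition eta (i : nat) : R := cos (theta i).

Lemma cos_npi (i : nat) : cos (i%:R * pi) = (-1) ^+ i :> R.
Proof.
elim: i => [|i IH]; first by rewrite mul0r cos0 expr0.
by rewrite -[i.+1]addn1 natrD mulrDl mul1r cosDpi IH exprD expr1 mulrN1.
Qed.

Lemma theta_ge0 i : 0 <= theta i.
Proof.
by rewrite /theta mulr_ge0 // divr_ge0 // pi_ge0.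
Qed.

Lemma theta_le (i : nat) : (i.*2 <= K)%N -> theta i <= pi / 2.
Proof.
move=> h; rewrite /theta.
have [->|Kp] := posnP K; first by rewrite invr0 !mulr0 divr_ge0 // pi_ge0.
have Kp' : 0 < K%:R :> R by rewrite ltr0n.
rewrite mulrCA ler_pM2l ?pi_gt0 // ler_pdivrMr //.
have : (i.*2)%:R <= K%:R :> R by rewrite ler_nat.
rewrite -muln2 natrM => ?; lra.
Qed.

Lemma theta_lt (i : nat) : (i.*2 < K)%N -> theta i < pi / 2.
Proof.
move=> h; rewrite /theta.
have Kp : (0 < K)%N by lia.
have Kp' : 0 < K%:R :> R by rewrite ltr0n.
rewrite mulrCA ltr_pM2l ?pi_gt0 // ltr_pdivrMr //.
have : (i.*2)%:R < K%:R :> R by rewrite ltr_nat.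
rewrite -muln2 natrM => ?; lra.
Qed.

Lemma eta_ge0 i : (i.*2 <= K)%N -> 0 <= eta i.
Proof.
move=> h; apply: cos_ge0_pihalf; rewrite (theta_le _ h) andbT.
apply: le_trans (theta_ge0 i); rewrite oppr_le0 divr_ge0 //; exact: pi_ge0.
Qed.

Lemma eta_gt0 i : (i.*2 < K)%N -> 0 < eta i.
Proof.
move=> h; apply: cos_gt0_pihalf; rewrite (theta_lt _ h) andbT.
apply: lt_le_trans (theta_ge0 i); rewrite oppr_lt0 divr_gt0 //; exact: pi_gt0.
Qed.

Lemma eta_le1 i : eta i <= 1.
Proof. exact: cos_le1. Qed.

Lemma eta_geN1 i : -1 <= eta i.
Proof. exact: cos_geN1. Qed.

Lemma eta_decr i j : (i < j)%N -> (j.*2 <= K)%N -> eta j < eta i.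
Proof.
move=> ij jK.
have Kp : (0 < K)%N by lia.
have Kp' : 0 < K%:R :> R by rewrite ltr0n.
have pih : pi / 2 <= pi :> R by rewrite ler_pdivrMr // ler_peMr ?pi_ge0 // ler1n.
rewrite /eta ltr_cos; last 2 first.
- by rewrite in_itv /= theta_ge0 (le_trans (theta_le i _) pih) //; lia.
- by rewrite in_itv /= theta_ge0 (le_trans (theta_le j _) pih).
by rewrite /theta ltr_pM2r ?ltr_nat // divr_gt0 // pi_gt0.
Qed.

Lemma eta_T i : (i.*2 <= K)%N -> (chebT (R:=R) K).[eta i] = (-1) ^+ i.
Proof.
move=> h; rewrite /chebT /eta; have [-> _] := chebT2_cos R K (theta i).
have [K0|Kp] := posnP K.
  by move: h; rewrite K0; case: i => // _; rewrite /theta !mul0r cos0.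
have K0 : K%:R != 0 :> R by rewrite pnatr_eq0 -lt0n.
by rewrite /theta mulrCA [K%:R * _]mulrC divfK // cos_npi.
Qed.

End Nodes.
Section Lag.
Variable R : realFieldType.

Lemma prod_XsubC_sign (I : Type) (e : seq I) (P : pred I) (f : I -> R) :
  (forall j, P j -> 0 <= f j) -> forall r,
  0 <= (-1) ^+ ((\sum_(j <- e | P j) 1)%N + r) *
       (\prod_(j <- e | P j) ('X - (f j)%:P))`_r.
Proof.
move=> f0; elim: e => [|a e IH] r.
  by rewrite !big_nil coefC; case: r => [|r] /=; rewrite ?mulr0 ?expr0 ?mulr1 // ler01.
rewrite !big_cons; case: ifP => Pa; last exact: IH.
rewrite mulrBl coefB coefXM coefCM.
have e1 : forall n r, (-1)^+(1 + n + r.+1) = (-1)^+(n+r) :> R.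
  by move=> n r0; rewrite (_ : (1 + n + r0.+1 = (n + r0).+2)%N) ?exprS ?mulN1r ?opprK //; lia.
have e2 : forall n r, (-1)^+(1 + n + r) = - (-1)^+(n+r) :> R.
  by move=> n r0; rewrite (_ : (1 + n + r0 = (n + r0).+1)%N) ?exprS ?mulN1r //; lia.
case: r => [|r] /=.
  rewrite sub0r mulrN e2 mulNr opprK addn0 mulrCA mulr_ge0 ?(f0 _ Pa) //.
  by have := IH 0%N; rewrite addn0.
rewrite mulrBr {1}e1 e2 mulNr opprK addr_ge0 //.
rewrite mulrCA mulr_ge0 ?(f0 _ Pa) //; exact (IH r.+1).
Qed.

End Lag.

Lemma sum_lt_min (n i : nat) : (\sum_(j < n) (j < i : nat))%N = minn i n.
Proof.
elim: n => [|n IH]; first by rewrite big_ord0 minn0.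
rewrite big_ord_recr /= IH; case: ltnP => h /=; lia.
Qed.

Section Lagr.
Variable R : realFieldType.
Variable M : nat.
Variable s : nat -> R.
Hypothesis s_ge0 : forall i, (i <= M)%N -> 0 <= s i.
Hypothesis s_le1 : forall i, (i <= M)%N -> s i <= 1.
Hypothesis s_decr : forall i j, (i < j)%N -> (j <= M)%N -> s j < s i.

Definition xs (j : nat) : R := if (j <= M)%N then s j else j%:R + 2.

Lemma xs_inj : injective xs.
Proof.
move=> a b; rewrite /xs.
have gen : forall a b, (a <= M)%N -> (b <= M)%N -> s a = s b -> a = b.
  move=> a0 b0 ha hb e; case: (ltngtP a0 b0) => // h.
    by have := s_decr _ _ h hb; rewrite e ltxx.
  by have := s_decr _ _ h ha; rewrite e ltxx.
case: ifP => ha; case: ifP => hb.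
- exact: gen.
- move=> e; exfalso; have := s_le1 _ ha; rewrite e; have := ler0n R b.
  move=> h1 h2; lra.
- move=> e; exfalso; have := s_le1 _ hb; rewrite -e; have := ler0n R a.
  move=> h1 h2; lra.
- by move/addIr/eqP; rewrite eqr_nat => /eqP.
Qed.

Lemma xs_ge0 j : 0 <= xs j.
Proof.
rewrite /xs; case: ifP => h; first exact: s_ge0.
by rewrite addr_ge0 // ler0n.
Qed.

Lemma xs_ord (j : 'I_M.+1) : xs j = s j.
Proof. by rewrite /xs -ltnS ltn_ord. Qed.

Definition Lg (i : 'I_M.+1) : {poly R} := tnth (M.+1.-lagrange xs) i.

Lemma lag_moment (r q : nat) : (q <= M)%N ->
  \sum_(i < M.+1) (Lg i)`_r * s i ^+ q = (r == q)%:R.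
Proof.
move=> hq.
have hs : (size ('X^q : {poly R}) <= M.+1)%N by rewrite size_polyXn.
have h := @lagrange_gen R M.+1 xs (ltn0Sn _) xs_inj _ hs.
have := congr1 (fun p : {poly R} => p`_r) h.
rewrite coefXn coef_sum => ->; apply: eq_bigr => i _.
rewrite coefCM hornerXn mulrC /xs -ltnS ltn_ord //.
Qed.

Lemma lag_sign (r : nat) (i : 'I_M.+1) : 0 <= (-1) ^+ (M + r + i) * (Lg i)`_r.
Proof.
rewrite /Lg (lagrangeE (ltn0Sn _) xs_inj) /= coefCM.
set p := \prod_(j < M.+1 | j != i) ('X - (xs j)%:P).
have hp : 0 <= (-1) ^+ (M + r) * p`_r.
  have := @prod_XsubC_sign R _ (index_enum 'I_M.+1) (fun j => j != i) (fun j => xs j)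
      (fun j _ => xs_ge0 j) r.
  suff -> : (\sum_(j <- index_enum 'I_M.+1 | j != i) 1)%N = M by [].
  by rewrite sum1_card cardC1 card_ord.
have hD : 0 < (-1) ^+ i * p.[xs i].
  rewrite /p horner_prod.
  have e : forall j : 'I_M.+1, j != i ->
      ('X - (xs j)%:P).[xs i] = (-1) ^+ (j < i : nat) * `|s i - s j|.
    move=> j ji; rewrite hornerXsubC !xs_ord.
    case: (ltngtP j i) => h /=.
    - by rewrite expr1 mulN1r ltr0_norm ?opprK // subr_lt0 s_decr // -ltnS.
    - by rewrite expr0 mul1r gtr0_norm // subr_gt0 s_decr // -ltnS.
    - by move: ji; rewrite (val_inj h) eqxx.
  rewrite (eq_bigr _ e) big_split /= prodrXr.
  have -> : (\sum_(j < M.+1 | j != i) (j < i : nat))%N = i.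
    have := sum_lt_min M.+1 i; rewrite (bigD1 i) //= ltnn add0n => ->.
    by apply/minn_idPl; rewrite ltnW.
  rewrite mulrA -exprD addnn -signr_odd odd_double expr0 mul1r.
  apply: prodr_gt0 => j ji; rewrite normr_gt0 subr_eq0.
  apply/negP => /eqP e2; move: ji; rewrite eq_sym.
  have : xs i = xs j by rewrite !xs_ord.
  by move/xs_inj/val_inj => ->; rewrite eqxx.
have -> : (-1) ^+ (M + r + i) * ((p.[xs i])^-1 * p`_r) =
          ((-1) ^+ i * p.[xs i])^-1 * ((-1) ^+ (M + r) * p`_r).
  rewrite invfM -[((-1) ^+ i)^-1]/(((-1) ^+ i)^-1) invr_sign exprD; ring.
by rewrite mulr_ge0 // invr_ge0 ltW.
Qed.

End Lagr.

Section Measure.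
Variable R : realType.

Lemma chebT_size (K : nat) : (size (chebT (R:=R) K) <= K.+1)%N.
Proof.
apply/leq_sizeP => j hj; rewrite /chebT; have [-> //] := chebT2_coef R K j.
by rewrite hj orbT.
Qed.

Lemma chebT_par (K m : nat) : odd (K + m) -> chebc (R:=R) K m = 0.
Proof. by move=> h; rewrite /chebc /chebT; have [-> //] := chebT2_coef R K m; rewrite h. Qed.

Lemma measure_ex (k l : nat) : (l <= k)%N ->
  exists N (t lam : nat -> R), (forall j, -1 <= t j <= 1) /\
   (forall m, (m <= k)%N -> \sum_(j < N) lam j * t j ^+ m = (m == l)%:R) /\
   \sum_(j < N) `|lam j| <= `|ctilde (R:=R) k l|.
Proof.
move=> lk.
have [K [hK oKl lK kK]] : exists K, [/\ ctilde (R:=R) k l = chebc K l, odd K = odd l,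
    (l <= K)%N & forall m, (m <= k)%N -> odd m = odd l -> (m <= K)%N].
  rewrite /ctilde; case: ifP => h; last first.
    exists k; split => //; move: h; rewrite (oddB lk).
    by case: (odd k); case: (odd l).
  case: k lk h => [|k'] lk h; first by move: h; rewrite sub0n.
  exists k'; split => //.
  - by move: h; rewrite (oddB lk) /=; case: (odd k'); case: (odd l).
  - rewrite leq_eqVlt in lk; case/orP: lk => [/eqP e|] //.
    by move: h; rewrite e subnn.
  - move=> m mk om; rewrite leq_eqVlt in mk; case/orP: mk => [/eqP e|] //.
    by move: h; rewrite (oddB lk) -e om addbb.
set M := K./2. set r := l./2. set e := odd l.
pose et i := eta R K i.
pose s i := et i ^+ 2.
have hM : forall i, (i <= M)%N -> (i.*2 <= K)%N by move=> i; rewrite geq_half_double.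
have et_ge0 : forall i, (i <= M)%N -> 0 <= et i by move=> i /hM; exact: eta_ge0.
have et_pos : forall i, (i <= M)%N -> 0 < et i ^+ e.
  move=> i iM; rewrite /e; case: (boolP (odd l)) => ol; last by rewrite expr0 ltr01.
  rewrite expr1; apply: eta_gt0; rewrite ltn_neqAle hM // andbT.
  by apply/negP => /eqP h; move: oKl; rewrite -h odd_double ol.
have s_ge0 : forall i, (i <= M)%N -> 0 <= s i by move=> i _; rewrite /s sqr_ge0.
have s_le1 : forall i, (i <= M)%N -> s i <= 1.
  move=> i iM; rewrite /s; have := et_ge0 i iM; have := eta_le1 R K i.
  rewrite -/(et i) => h1 h2; nra.
have s_decr : forall i j, (i < j)%N -> (j <= M)%N -> s j < s i.
  move=> i j ij jM; rewrite /s; have := et_ge0 j jM; have := @eta_decr R K i j ij (hM _ jM).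
  rewrite -/(et i) -/(et j) => h1 h2; nra.
pose w i := (Lg R M s (inord i))`_r / et i ^+ e.
pose A m := \sum_(i < M.+1) w i * et i ^+ m.
have hA : forall m, (m <= K)%N -> odd m = odd l -> A m = (m == l)%:R.
  move=> m mK om.
  have mE : m = (e + (m./2).*2)%N by rewrite /e -om odd_double_half.
  have lE : l = (e + r.*2)%N by rewrite /e /r odd_double_half.
  have qM : (m./2 <= M)%N by rewrite /M half_leq.
  have -> : (m == l) = (r == m./2).
    by rewrite {1}mE {1}lE; apply/eqP/eqP => h; rewrite -!muln2 in h *; lia.
  rewrite /A -(@lag_moment R M s s_le1 s_decr r _ qM).
  apply: eq_bigr => i _; rewrite /w inord_val.
  rewrite [in et i ^+ m]mE exprD mulrA divfK; last first.
    by rewrite gt_eqF // et_pos // -ltnS.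
  by rewrite -mul2n exprM.
have hsgn : forall i, (i <= M)%N -> 0 <= (-1)^+(M + r + i) * w i.
  move=> i iM; rewrite /w mulrA; apply: divr_ge0; last exact: ltW (et_pos i iM).
  have := @lag_sign R M s s_ge0 s_le1 s_decr r (inord i).
  by rewrite inordK // ltnS.
have hsum : \sum_(i < M.+1) (-1)^+i * w i = chebc K l.
  transitivity (\sum_(i < M.+1) w i * (chebT K).[et i]).
    apply: eq_bigr => i _.
    have hi : (i <= M)%N by rewrite -ltnS ltn_ord.
    by rewrite (@eta_T R K i (hM i hi)) mulrC.
  under eq_bigr do rewrite (horner_coef_wide _ (chebT_size K)) mulr_sumr.
  rewrite exchange_big /=.
  transitivity (\sum_(m < K.+1) chebc (R:=R) K m * (m == l :> nat)%:R).
    apply: eq_bigr => m _.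
    under eq_bigr do rewrite mulrCA.
    rewrite -mulr_sumr -/(A m) -/(chebc K m).
    have [om|om] := boolP (odd m == odd l).
      by rewrite hA // ?(eqP om) // -ltnS ltn_ord.
    rewrite chebT_par ?mul0r //.
    by rewrite oddD oKl; move: om; case: (odd m); case: (odd l).
  have lK' : (l < K.+1)%N by rewrite ltnS.
  rewrite (bigD1 (Ordinal lK')) //= eqxx mulr1 big1 ?addr0 // => j /eqP jl.
  rewrite (_ : (j == l :> nat) = false) ?mulr0 //.
  by apply/negP => /eqP e1; apply: jl; apply: val_inj.
have hTV : \sum_(i < M.+1) `|w i| <= `|chebc (R:=R) K l|.
  have -> : \sum_(i < M.+1) `|w i| = (-1)^+(M + r) * \sum_(i < M.+1) (-1)^+i * w i.
    rewrite mulr_sumr; apply: eq_bigr => i _; rewrite mulrA -exprD.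
    have h := hsgn i (ltn_ord i).
    by rewrite -(ger0_norm h) [in RHS]normrM normrX normrN1 expr1n mul1r.
  rewrite hsum; apply: le_trans (ler_norm _) _.
  by rewrite normrM normrX normrN1 expr1n mul1r.
pose t j := if (j < M.+1)%N then et j else - et (j - M.+1)%N.
pose lam j := if (j < M.+1)%N then w j / 2 else (-1)^+e * w (j - M.+1)%N / 2.
have hsplit : forall F : nat -> R, \sum_(j < M.+1 + M.+1) F j =
    \sum_(i < M.+1) F i + \sum_(i < M.+1) F (M.+1 + i)%N.
  by move=> F; rewrite big_split_ord.
exists (M.+1 + M.+1)%N, t, lam; split; last split.
- move=> j; rewrite /t /et; case: ifP => _.
    by have := eta_le1 R K j; have := eta_geN1 R K j; move=> a b; apply/andP; split; lra.
  have := eta_le1 R K (j - M.+1)%N; have := eta_geN1 R K (j - M.+1)%N.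
  by move=> a b; apply/andP; split; lra.
- move=> m mk; rewrite (hsplit (fun j => lam j * t j ^+ m)).
  have e2 : forall i : 'I_M.+1, (M.+1 + i < M.+1)%N = false.
    by move=> i; rewrite ltnNge leq_addr.
  rewrite /lam /t.
  under eq_bigr do rewrite ltn_ord.
  under [X in _ + X = _]eq_bigr do rewrite e2 addKn.
  rewrite -big_split /=.
  transitivity ((1 + (-1)^+(e + m)) / 2 * A m).
    rewrite /A mulr_sumr; apply: eq_bigr => i _.
    rewrite [(- et i) ^+ m]exprNn exprD.
    set a := (-1) ^+ e; set b := (-1) ^+ m; set c := et i ^+ m; set d := w i.
    by field.
  have [om|om] := boolP (odd m == odd l).
    rewrite -signr_odd oddD oddb /e (eqP om) addbb expr0 hA //; last exact: eqP.
      by rewrite -[1 + 1]/(2%:R) divff ?mul1r // pnatr_eq0.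
    by apply: kK => //; exact: eqP.
  rewrite -signr_odd oddD oddb /e.
  have -> : odd l (+) odd m = true by move: om; case: (odd m); case: (odd l).
  rewrite expr1 subrr mul0r mul0r.
  case: eqP => // ml; move: om; by rewrite ml eqxx.
- rewrite (hsplit (fun j => `|lam j|)).
  have e2 : forall i : 'I_M.+1, (M.+1 + i < M.+1)%N = false.
    by move=> i; rewrite ltnNge leq_addr.
  rewrite /lam.
  under eq_bigr do rewrite ltn_ord.
  under [X in _ + X <= _]eq_bigr do rewrite e2 addKn.
  rewrite -big_split /= hK.
  apply: le_trans hTV; rewrite le_eqVlt; apply/orP; left; apply/eqP.
  have hw : forall x : R, `|x / 2| + `|(-1)^+e * x / 2| = `|x|.
    move=> x; rewrite -mulrA [`|(-1)^+e * _|]normrM normrX normrN1 expr1n mul1r.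
    rewrite normrM (ger0_norm (_ : 0 <= 2^-1)) ?invr_ge0 ?ler0n //; lra.
  by apply: eq_bigr => i _; exact: hw.
Qed.
End Measure.

Section Cube.
Variable R : realType.
Variable n : nat.

Definition Pt (t : R) (x : cube n) : R := \prod_(a : 'I_n) (1 + t * Defs.coord (x a)).

Lemma Pt_expand t x : Pt t x = \sum_(S : {set 'I_n}) t ^+ #|S| * walsh n S x.
Proof.
rewrite /Pt; under eq_bigr do rewrite addrC.
rewrite bigA_distr; apply: eq_bigr => S _.
rewrite -big_mkcond /= big_split /= prodr_const /walsh.
by [].
Qed.

Lemma Pt_ge0 t x : -1 <= t <= 1 -> 0 <= Pt t x.
Proof.
move=> /andP [h1 h2]; rewrite /Pt; apply: prodr_ge0 => a _.
rewrite /Defs.coord; case: (x a); lra.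
Qed.

Lemma Pt_sum t : \sum_(x : cube n) Pt t x = 2 ^+ n.
Proof.
rewrite /Pt.
have := bigA_distr_bigA (fun (a : 'I_n) (b : bool) => 1 + t * Defs.coord (R:=R) b).
move=> <-.
rewrite (eq_bigr (fun=> 2)); last by move=> a _; rewrite big_bool /coord /=; ring.
by rewrite prodr_const card_ord.
Qed.

End Cube.

Local Open Scope classical_set_scope.

Lemma symf_expand (R : realType) (n d : nat) (alpha : nat -> R) x :
  symf n d alpha x = \sum_(S : {set 'I_n})
     (\sum_(l < d.+1) alpha l * (#|S| == l)%:R) * walsh n S x.
Proof.
rewrite /symf /Defs.esym.
under eq_bigr do rewrite big_mkcond mulr_sumr.
rewrite exchange_big /=; apply: eq_bigr => S _; rewrite mulr_suml.
by apply: eq_bigr => l _; case: eqP => _; rewrite ?mulr1 ?mul1r ?mulr0 ?mul0r.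
Qed.

Theorem theorem1p4 (R : realType) (n k d : nat) (hkn : (k <= n)%N) (hdk : (d <= k)%N)
  (alpha : nat -> R) :
  inf [set norm1 n (fun x => symf n d alpha x - g x) | g in @Pgt R n k]
    <= \sum_(l < d.+1) `|alpha l| * `|ctilde (R := R) k l|.
Proof.
have hex : forall l : nat, exists p : nat * (nat -> R) * (nat -> R), (l <= k)%N ->
   (forall j, -1 <= p.1.2 j <= 1) /\
   (forall m, (m <= k)%N -> \sum_(j < p.1.1) p.2 j * p.1.2 j ^+ m = (m == l)%:R) /\
   \sum_(j < p.1.1) `|p.2 j| <= `|ctilde (R:=R) k l|.
  move=> l; case: (boolP (l <= k)%N) => lk; last by exists (0%N, fun=> 0, fun=> 0).
  have [N [t [lam [h1 [h2 h3]]]]] := @measure_ex R k l lk.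
  by exists (N, t, lam).
have [F hF] := choice hex.
pose N l := (F l).1.1. pose tt l := (F l).1.2. pose lam l := (F l).2.
have hl : forall l : 'I_d.+1, (l <= k)%N by move=> l; apply: leq_trans hdk; rewrite -ltnS.
pose H x := \sum_(l < d.+1) alpha l * \sum_(j < N l) lam l j * Pt R n (tt l j) x.
pose g x := symf n d alpha x - H x.
pose c (S : {set 'I_n}) := \sum_(l < d.+1) alpha l * (#|S| == l)%:R -
   \sum_(l < d.+1) alpha l * \sum_(j < N l) lam l j * tt l j ^+ #|S|.
have gP : Pgt n k g.
  exists c; split.
    move=> S hS; rewrite /c; apply/eqP; rewrite subr_eq0; apply/eqP; apply: eq_bigr => l _.
    by have [_ [h _]] := hF l (hl l); rewrite (h _ hS).
  move=> x; rewrite /g /c symf_expand.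
  under [in RHS]eq_bigr do rewrite mulrBl.
  rewrite sumrB; congr (_ - _).
  rewrite /H.
  under eq_bigr do under eq_bigr do rewrite Pt_expand mulr_sumr.
  under eq_bigr do rewrite exchange_big mulr_sumr.
  rewrite exchange_big /=; apply: eq_bigr => S _; rewrite mulr_suml.
  apply: eq_bigr => l _; rewrite -mulrA mulr_suml; congr (_ * _).
  by apply: eq_bigr => j _; rewrite mulrA.
have hfg : (fun x => symf n d alpha x - g x) = H.
  by apply: funext => x; rewrite /g opprB addrC subrK.
set E := [set _ | g in _].
have hlb : has_lbound E.
  exists 0 => y [g0 _ <-]; rewrite /norm1 divr_ge0 //.
    by apply: sumr_ge0 => x _.
  by rewrite exprn_ge0.
apply: le_trans (ge_inf hlb (_ : E (norm1 n H))) _.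
  by exists g => //; rewrite hfg.
have n2 : 0 < 2 ^+ n :> R by rewrite exprn_gt0.
rewrite /norm1 ler_pdivrMr //.
apply: le_trans (_ : \sum_x \sum_(l < d.+1) `|alpha l| *
      \sum_(j < N l) `|lam l j| * Pt R n (tt l j) x <= _).
  apply: ler_sum => x _; rewrite /H; apply: le_trans (ler_norm_sum _ _ _) _.
  apply: ler_sum => l _; rewrite normrM ler_wpM2l //.
  apply: le_trans (ler_norm_sum _ _ _) _.
  apply: ler_sum => j _; rewrite normrM [`|Pt _ _ _ _|]ger0_norm //.
  by apply: Pt_ge0; have [h _] := hF l (hl l); exact: h.
rewrite exchange_big /= mulr_suml; apply: ler_sum => l _.
rewrite -mulr_sumr -mulrA ler_wpM2l //.
rewrite exchange_big /=.
have [_ [_ h3]] := hF l (hl l).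
under eq_bigr do rewrite -mulr_sumr Pt_sum.
by rewrite -mulr_suml ler_wpM2r // ltW.
Qed.
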